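(* Let $N\ge 2$ and $R\ge 3$, and let $S=\lfloor R/3\rfloor$. For every $c<2-\tfrac{1}{2^S}$, there is no $c$-approximation randomized online algorithm for the minimum congestion routing problem in the Clos network $C_{N,R}$.
   Context: Clos network $C_{N,R}$: a directed graph with $N$ middle switches $M_1,\dots,M_N$, $R$ input switches $I_1,\dots,I_R$, $R$ output switches $O_1,\dots,O_R$, source servers $s_i^k$ and destination servers $t_i^k$ ($i\in[R]$, $k\in[N]$), and edges $s_i^kI_i$, $I_iM_m$, $M_mO_i$, $O_it_i^k$ for all $i\in[R]$, $m,k\in[N]$; all links have capacity $1$. A flow $f$ has a source server $s(f)$ of input switch $I_{i(f)}$, a destination server $t(f)$ of output switch $O_{j(f)}$, and a positive demand $\mathrm{dem}(f)$; a set of flows must have total demand at most $1$ leaving each source server and entering each destination server. A routing $r$ assigns each flow a single middle switch $r(f)\in[N]$; its congestion is $\max_{i\in[R],m\in[N]}\max\{\sum_{f:i(f)=i,r(f)=m}\mathrm{dem}(f),\ \sum_{f:j(f)=i,r(f)=m}\mathrm{dem}(f)\}$; $OPT(\mathcal{F})$ is the minimum congestion over all routings of $\mathcal{F}$. A deterministic online algorithm defines a routing for every sequence of flows such that for every prefix $P$ of a sequence $F$, the routing of $P$ when given $P$ equals the routing of $P$ when given $F$. A randomized online algorithm is a probability distribution over deterministic online algorithms; it is a $c$-approximation if for every sequence $\mathcal{F}$ of flows its expected congestion is at most $c\cdot OPT(\mathcal{F})$. *)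

(* Defs.v *)
From HB Require Import structures.
From mathcomp Require Import all_boot all_order all_algebra.
From mathcomp Require Import all_classical all_reals all_analysis.
Set Implicit Arguments. Unset Strict Implicit. Unset Printing Implicit Defensive.
Import Order.TTheory GRing.Theory Num.Theory.
Local Open Scope ring_scope.

(* A flow in the Clos network C_{N,R}: source server s_{src_in}^{src_k}
   (of input switch I_{src_in}), destination server t_{dst_out}^{dst_k}
   (of output switch O_{dst_out}) and a demand. *)
Record flow (Rt : realType) (N R : nat) := Flow {
  src_in : 'I_R; src_k : 'I_N; dst_out : 'I_R; dst_k : 'I_N; dem : Rt }.

Section Clos.
Variables (Rt : realType) (N R : nat).
Local Notation flowT := (flow Rt N R).

Definition valid_flows (F : seq flowT) : Prop :=
  (forall f, f \in map (@dem _ _ _) F -> 0 < f) /\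
  (forall (i : 'I_R) (k : 'I_N),
     \sum_(f <- F | (src_in f == i) && (src_k f == k)) dem f <= 1) /\
  (forall (j : 'I_R) (k : 'I_N),
     \sum_(f <- F | (dst_out f == j) && (dst_k f == k)) dem f <= 1).

(* congestion of routing r (r`_t = middle switch of the t-th flow of F) *)
Definition congestion (F : seq flowT) (r : seq 'I_N) : Rt :=
  \big[Num.max/0]_(i < R) \big[Num.max/0]_(m < N)
    Num.max (\sum_(p <- zip F r | (src_in p.1 == i) && (p.2 == m)) dem p.1)
            (\sum_(p <- zip F r | (dst_out p.1 == i) && (p.2 == m)) dem p.1).

(* OPT(F): minimum congestion over all routings of F (in \bar Rt; +oo only
   if there is no routing at all) *)
Definition OPT (F : seq flowT) : \bar Rt :=
  \big[Order.min/+oo%E]_(r : (size F).-tuple 'I_N) (congestion F r)%:E.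

Definition det_online (A : seq flowT -> seq 'I_N) : Prop :=
  (forall F, size (A F) = size F) /\
  (forall F n, A (take n F) = take n (A F)).

(* randomized online c-approximation algorithm: a probability distribution over
   deterministic online algorithms, i.e. a random deterministic online algorithm
   on some probability space, whose routing of each sequence is measurable *)
Definition rand_c_approx (c : Rt) : Prop :=
  exists (d : measure_display) (T : measurableType d) (P : probability T Rt)
         (alg : T -> seq flowT -> seq 'I_N),
    (forall w, det_online (alg w)) /\
    (forall F s, measurable [set w | alg w F = s]) /\
    (forall F, valid_flows F ->
       (\int[P]_w (congestion F (alg w F))%:E <= c%:E * OPT F)%E).

End Clos.

(* Main.v *)
Require Import Defs.
From HB Require Import structures.
From mathcomp Require Import all_boot all_order all_algebra.
From mathcomp Require Import all_classical all_reals all_analysis.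
From mathcomp Require Import measurable_realfun.
From mathcomp Require Import zify ring lra.
Import Order.TTheory GRing.Theory Num.Theory.
Set Implicit Arguments. Unset Strict Implicit. Unset Printing Implicit Defensive.
Local Open Scope ring_scope.

Section Comb.
Variables (Rt : realType) (N R : nat).
Local Notation flowT := (flow Rt N R).
Local Notation pairT := (flowT * 'I_N)%type.

Definition lsrc (L : seq pairT) (i : 'I_R) (m : 'I_N) :=
  count (fun p : pairT => (src_in p.1 == i) && (p.2 == m)) L.
Definition ldst (L : seq pairT) (i : 'I_R) (m : 'I_N) :=
  count (fun p : pairT => (dst_out p.1 == i) && (p.2 == m)) L.
Definition good (L : seq pairT) : bool :=
  [forall i, forall m, (lsrc L i m <= 1)%N && (ldst L i m <= 1)%N].

Lemma goodP L : reflect (forall i m, (lsrc L i m <= 1)%N /\ (ldst L i m <= 1)%N) (good L).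
Proof.
apply: (iffP forallP) => [H i m|H i]; first by have /forallP/(_ m)/andP[] := H i.
by apply/forallP => m; have [-> ->] := H i m.
Qed.

Lemma good_catl L1 L2 : good (L1 ++ L2) -> good L1.
Proof.
move/goodP => H; apply/goodP => i m; have [h1 h2] := H i m.
rewrite /lsrc /ldst !count_cat in h1 h2; split; rewrite /lsrc /ldst; lia.
Qed.

Lemma good_catr L1 L2 : good (L1 ++ L2) -> good L2.
Proof.
move/goodP => H; apply/goodP => i m; have [h1 h2] := H i m.
rewrite /lsrc /ldst !count_cat in h1 h2; split; rewrite /lsrc /ldst; lia.
Qed.

Lemma take_zip' (S T : Type) n (s : seq S) (t : seq T) :
  take n (zip s t) = zip (take n s) (take n t).
Proof. by elim: s t n => [|x s IH] [|y t] [|n] //=; rewrite IH. Qed.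

Definition online (A : seq flowT -> seq 'I_N) :=
  (forall F, size (A F) = size F) /\ (forall F n, A (take n F) = take n (A F)).

Lemma online_split A Q F : online A ->
  A (Q ++ F) = A Q ++ drop (size Q) (A (Q ++ F)) /\
  size (drop (size Q) (A (Q ++ F))) = size F.
Proof.
move=> [Hs Ht]; split; last by rewrite size_drop Hs size_cat; lia.
by rewrite -{2}(take_size_cat F (erefl (size Q))) Ht cat_take_drop.
Qed.

Lemma good_prefix A Q F : online A ->
  good (zip (Q ++ F) (A (Q ++ F))) -> good (zip Q (A Q)).
Proof.
move=> [Hs Ht] H.
have -> : zip Q (A Q) = take (size Q) (zip (Q ++ F) (A (Q ++ F))).
  by rewrite take_zip' -Ht !take_size_cat.
by move: H; rewrite -{1}(cat_take_drop (size Q) (zip _ _)); apply: good_catl.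
Qed.

Lemma map_const' (S T : Type) (x : T) (s : seq S) : map (fun _ => x) s = nseq (size s) x.
Proof. by elim: s => //= y s ->. Qed.

Lemma cnt_nseq (sel : flowT -> 'I_R) f n (r : seq 'I_N) i m :
  size r = n -> sel f = i ->
  count (fun p : pairT => (sel p.1 == i) && (p.2 == m)) (zip (nseq n f) r) =
  count (pred1 m) r.
Proof.
move=> <- <-; elim: r => //= x r IH; rewrite IH eqxx /=; done.
Qed.

Lemma uniq_of_cnt (r : seq 'I_N) : (forall m, (count (pred1 m) r <= 1)%N) -> uniq r.
Proof.
move=> H; apply: count_mem_uniq => x; have := H x.
case: (boolP (x \in r)) => xr.
  by rewrite -has_pred1 has_count in xr; lia.
by move: xr; rewrite -has_pred1 has_count; lia.
Qed.

Lemma compl1 (r : seq 'I_N) x y : uniq r -> size r = N.-1 -> x \notin r -> y \notin r -> x = y.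
Proof.
move=> ur sr xr yr; apply/eqP/negPn/negP => xy.
have u : uniq (x :: y :: r) by rewrite /= inE negb_or xy xr yr ur.
have := uniq_leq_size u (fun z _ => mem_enum 'I_N z).
have hN : (0 < N)%N by case: (x) => ? ? /=; lia.
rewrite size_enum_ord /= sr; lia.
Qed.

Lemma gadget_abs (rX rY : seq 'I_N) z w v :
  size rX = N.-1 -> size rY = N.-1 ->
  (forall m, (count (pred1 m) rX + (z == m) <= 1)%N) ->
  (forall m, (count (pred1 m) rY + (z == m) <= 1)%N) ->
  (forall m, (count (pred1 m) rX + (w == m) <= 1)%N) ->
  (forall m, (count (pred1 m) rY + (v == m) <= 1)%N) ->
  w != v -> False.
Proof.
move=> sX sY H1 H2 H3 H4 wv.
have uX : uniq rX by apply: uniq_of_cnt => m; have := H1 m; lia.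
have uY : uniq rY by apply: uniq_of_cnt => m; have := H2 m; lia.
have nin (r : seq 'I_N) (t : 'I_N) : (forall m, (count (pred1 m) r + (t == m) <= 1)%N) -> t \notin r.
  move=> H; have := H t; rewrite eqxx -has_pred1 has_count; lia.
have e1 := compl1 uX sX (nin _ _ H1) (nin _ _ H3).
have e2 := compl1 uY sY (nin _ _ H2) (nin _ _ H4).
by move: wv; rewrite -e1 -e2 eqxx.
Qed.


Lemma bigmax_ge_seq (I : Type) (s : seq I) (f : I -> Rt) x0 (j : I) k :
  (k < size s)%N -> nth j s k = j -> f j <= \big[Num.max/x0]_(i <- s) f i.
Proof.
elim: s k => [|y s IH] k //= hk ej; rewrite big_cons le_max.
case: k hk ej => [|k] /= hk ej; first by rewrite ej lexx.
by rewrite (IH k) ?orbT.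
Qed.

Lemma bigmax_ge_idx (I : Type) (s : seq I) (f : I -> Rt) x0 :
  x0 <= \big[Num.max/x0]_(i <- s) f i.
Proof. by elim: s => [|y s IH]; rewrite ?big_nil ?big_cons ?lexx // le_max IH orbT. Qed.

Lemma bigmax_ge_ord n (f : 'I_n -> Rt) x0 j : f j <= \big[Num.max/x0]_(i < n) f i.
Proof.
have hk : (index j (index_enum 'I_n) < size (index_enum 'I_n))%N.
  by rewrite index_mem mem_index_enum.
exact: bigmax_ge_seq hk (nth_index _ (mem_index_enum j)).
Qed.

Lemma bigmax_le_seq (I : Type) (s : seq I) (f : I -> Rt) x0 x :
  x0 <= x -> (forall i, f i <= x) -> \big[Num.max/x0]_(i <- s) f i <= x.
Proof.
move=> h0 hf; elim: s => [|y s IH]; rewrite ?big_nil ?big_cons // ge_max hf IH //.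
Qed.

Lemma sum_dem (L : seq pairT) (P : pred pairT) dl :
  all (fun p : pairT => dem p.1 == dl) L ->
  \sum_(p <- L | P p) dem p.1 = (count P L)%:R * dl.
Proof.
elim: L => [|p L IH] /=; first by rewrite big_nil mul0r.
move=> /andP[/eqP hp hL]; rewrite big_cons IH //.
by case: (P p); rewrite /= ?add0n // natrD mulrDl mul1r hp.
Qed.

Lemma all_zip_dem (F : seq flowT) (r : seq 'I_N) dl :
  all (fun f => dem f == dl) F -> all (fun p : pairT => dem p.1 == dl) (zip F r).
Proof. by elim: F r => [|f F IH] [|x r] //= /andP[-> hF]; apply: IH. Qed.

Lemma cong_ge_src (F : seq flowT) (r : seq (ordinal N)) i m :
  \sum_(p <- zip F r | (src_in p.1 == i) && (p.2 == m)) dem p.1 <= congestion F r.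
Proof.
rewrite /congestion; apply: le_trans (bigmax_ge_ord _ _ i).
by apply: le_trans (bigmax_ge_ord _ _ m); rewrite le_max lexx.
Qed.

Lemma cong_ge_dst (F : seq flowT) (r : seq (ordinal N)) i m :
  \sum_(p <- zip F r | (dst_out p.1 == i) && (p.2 == m)) dem p.1 <= congestion F r.
Proof.
rewrite /congestion; apply: le_trans (bigmax_ge_ord _ _ i).
by apply: le_trans (bigmax_ge_ord _ _ m); rewrite le_max lexx orbT.
Qed.

Lemma cong_ge0 (F : seq flowT) (r : seq (ordinal N)) : 0 <= congestion F r.
Proof. exact: bigmax_ge_idx. Qed.


Lemma natdl_le (n : nat) (dl x : Rt) : 0 <= dl -> (n <= 1)%N -> n%:R * dl <= dl.
Proof.
move=> h0 hn; rewrite -[X in _ <= X]mul1r ler_wpM2r //.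
by rewrite -[1]/(1%:R) ler_nat.
Qed.

Lemma cong_good (F : seq flowT) (r : seq 'I_N) dl : 0 <= dl ->
  all (fun f => dem f == dl) F -> good (zip F r) -> congestion F r <= dl.
Proof.
move=> h0 hF /goodP hg; have hz := all_zip_dem r hF.
rewrite /congestion; apply: bigmax_le_seq => // i; apply: bigmax_le_seq => // m.
have [h1 h2] := hg i m.
by rewrite ge_max !(sum_dem _ hz) !natdl_le.
Qed.

Lemma cong_bad (F : seq flowT) (r : seq 'I_N) dl : 0 <= dl ->
  all (fun f => dem f == dl) F -> ~~ good (zip F r) -> 2%:R * dl <= congestion F r.
Proof.
move=> h0 hF /forallPn [i /forallPn [m]]; have hz := all_zip_dem r hF.
rewrite negb_and -!ltnNge => /orP[h|h].
  apply: le_trans (cong_ge_src F r i m); rewrite (sum_dem _ hz).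
  by rewrite ler_wpM2r // ler_nat.
apply: le_trans (cong_ge_dst F r i m); rewrite (sum_dem _ hz).
by rewrite ler_wpM2r // ler_nat.
Qed.

Lemma cong_pos (F : seq flowT) (r : seq 'I_N) dl : 0 <= dl ->
  all (fun f => dem f == dl) F -> size r = size F -> F <> [::] -> dl <= congestion F r.
Proof.
move=> h0 hF; case: F hF => [//|f F] hF; case: r => [//|x r] _ _.
have hz := all_zip_dem (x :: r) hF.
apply: le_trans (cong_ge_src _ _ (src_in f) x); rewrite (sum_dem _ hz) /=.
rewrite !eqxx /= -[X in X <= _]mul1r ler_wpM2r //.
by rewrite -[1]/(1%:R) ler_nat.
Qed.

End Comb.

Section Gad.
Variables (Rt : realType) (N R : nat) (i0 : 'I_R) (m0 : 'I_N) (dl : Rt).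
Local Notation flowT := (flow Rt N R).
Local Notation pairT := (flowT * 'I_N)%type.

Definition sw n : 'I_R := insubd i0 n.
Definition sm n : 'I_N := insubd m0 n.
Definition mkf a b : flowT := @Flow Rt N R (sw a) m0 (sw b) m0 dl.
Definition fX k := mkf (3*k) (3*k).
Definition fY k := mkf (3*k).+1 (3*k).+1.
Definition fZ k := mkf (3*k) (3*k).+1.
Definition fW k := mkf (3*k).+2 (3*k).
Definition fV k := mkf (3*k).+2 (3*k).+1.
Definition suf k (b : bool) := if b then [:: fZ k] else [:: fW k; fV k].
Definition sufr (b : bool) := if b then [:: sm N.-1] else [:: sm N.-1; sm 0].
Definition flows k b := nseq N.-1 (fX k) ++ nseq N.-1 (fY k) ++ suf k b.
Definition gad k b : seq pairT :=
  [seq (fX k, sm j) | j <- iota 0 N.-1] ++ [seq (fY k, sm j) | j <- iota (~~ b) N.-1]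
  ++ zip (suf k b) (sufr b).
Fixpoint gads k bs : seq pairT :=
  if bs is b :: bs' then gad k b ++ gads k.+1 bs' else [::].
Definition Fs k bs := map fst (gads k bs).

Lemma fst_gad k b : map fst (gad k b) = flows k b.
Proof.
rewrite /gad /flows !map_cat -!map_comp /comp /= !map_const' !size_iota.
by case: b.
Qed.

Lemma Fs_cons k b bs : Fs k (b :: bs) = flows k b ++ Fs k.+1 bs.
Proof. by rewrite /Fs /= map_cat fst_gad. Qed.

Lemma good_parts (A : seq flowT -> seq 'I_N) (Q X Y s : seq flowT) : online A ->
  good (zip (Q ++ X ++ Y ++ s) (A (Q ++ X ++ Y ++ s))) ->
  let r := A (Q ++ X ++ Y) in
  exists r' : seq 'I_N, size r' = size s /\
    good (zip X (take (size X) (drop (size Q) r)) ++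
          zip Y (drop (size X) (drop (size Q) r)) ++ zip s r').
Proof.
move=> hA hg r.
have [e1 e2] := online_split (Q ++ X ++ Y) s hA.
move: e1 e2; set r' := drop (size (Q ++ X ++ Y)) (A ((Q ++ X ++ Y) ++ s)) => e1 e2.
exists r'; split => //.
have eq : Q ++ X ++ Y ++ s = (Q ++ X ++ Y) ++ s by rewrite !catA.
move: hg; rewrite eq e1 -/r -!catA.
have sr : size r = (size Q + size X + size Y)%N by rewrite /r hA.1 !size_cat addnA.
set rX := take (size X) (drop (size Q) r).
set rY := drop (size X) (drop (size Q) r).
set rQ := take (size Q) r.
have er : r = rQ ++ rX ++ rY by rewrite /rQ /rX /rY !cat_take_drop.
rewrite er -!catA zip_cat; last by rewrite size_take sr; case: ltnP => //; lia.
rewrite zip_cat; last by rewrite size_take size_drop sr; case: ltnP => //; lia.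
rewrite zip_cat; last by rewrite !size_drop sr; lia.
move=> h; apply: good_catr h.
Qed.

Lemma gadget_contra (A : seq flowT -> seq 'I_N) Q k : online A ->
  good (zip (Q ++ flows k true) (A (Q ++ flows k true))) ->
  good (zip (Q ++ flows k false) (A (Q ++ flows k false))) -> False.
Proof.
move=> hA h1 h2; rewrite /flows in h1 h2.
have [r1 [s1 g1]] := good_parts hA h1.
have [r2 [s2 g2]] := good_parts hA h2.
move: g1 g2; set r := A _; set rX := take _ _; set rY := drop _ (drop _ _).
have sr : size r = (size Q + N.-1 + N.-1)%N by rewrite /r hA.1 !size_cat !size_nseq addnA.
have sX : size rX = N.-1 by rewrite /rX !size_nseq size_take size_drop sr; case: ltnP; lia.
have sY : size rY = N.-1 by rewrite /rY !size_nseq !size_drop sr; lia.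
case: r1 s1 => [|z [|]] //= _; case: r2 s2 => [|w [|v [|]]] //= _.
move=> /goodP g1 /goodP g2.
apply: (@gadget_abs N rX rY z w v sX sY).
- move=> m; have [+ _] := g1 (sw (3*k)) m; rewrite /lsrc !count_cat.
  rewrite (@cnt_nseq _ _ _ (@src_in _ _ _) (fX k) _ _ _ m sX erefl) /= eqxx /=; lia.
- move=> m; have [_ +] := g1 (sw (3*k).+1) m; rewrite /ldst !count_cat.
  rewrite (@cnt_nseq _ _ _ (@dst_out _ _ _) (fY k) _ _ _ m sY erefl) /= eqxx /=; lia.
- move=> m; have [_ +] := g2 (sw (3*k)) m; rewrite /ldst !count_cat.
  rewrite (@cnt_nseq _ _ _ (@dst_out _ _ _) (fX k) _ _ _ m sX erefl) /= eqxx /=; lia.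
- move=> m; have [_ +] := g2 (sw (3*k).+1) m; rewrite /ldst !count_cat.
  rewrite (@cnt_nseq _ _ _ (@dst_out _ _ _) (fY k) _ _ _ m sY erefl) /= eqxx /=; lia.
- apply/negP => /eqP ewv; have [+ _] := g2 (sw (3*k).+2) w; rewrite /lsrc !count_cat.
  rewrite /= eqxx ewv eqxx /=; lia.
Qed.

Lemma uniq_good (A : seq flowT -> seq 'I_N) : online A ->
  forall bs1 bs2 k Q, size bs1 = size bs2 ->
  good (zip (Q ++ Fs k bs1) (A (Q ++ Fs k bs1))) ->
  good (zip (Q ++ Fs k bs2) (A (Q ++ Fs k bs2))) -> bs1 = bs2.
Proof.
move=> hA; elim=> [|b1 t1 IH] [|b2 t2] k Q //= [st] g1 g2.
rewrite Fs_cons catA in g1; rewrite Fs_cons catA in g2.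
case: (eqVneq b1 b2) => [eb|nb].
  by subst b2; rewrite (IH t2 k.+1 (Q ++ flows k b1) st g1 g2).
have p1 := good_prefix hA g1; have p2 := good_prefix hA g2.
by move: nb p1 p2; clear g1 g2; case: b1; case: b2 => // _ p1 p2; [case: (gadget_contra hA p1 p2)|case: (gadget_contra hA p2 p1)].
Qed.

Lemma sw_eq n i : (n < R)%N -> (sw n == i) = (n == nat_of_ord i).
Proof. by move=> hn; rewrite -(inj_eq val_inj) val_insubd /= hn. Qed.

Lemma sm_eq j m : (j < N)%N -> (sm j == m) = (j == nat_of_ord m).
Proof. by move=> hn; rewrite -(inj_eq val_inj) val_insubd /= hn. Qed.

Lemma cnt_blk (sel : flowT -> 'I_R) f s n i m : (s + n <= N)%N ->
  count (fun p : pairT => (sel p.1 == i) && (p.2 == m)) [seq (f, sm j) | j <- iota s n] =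
  ((sel f == i) * ((s <= nat_of_ord m) && (nat_of_ord m < s + n)))%N.
Proof.
move=> hs; rewrite count_map /preim /=; case: (sel f == i) => /=.
  rewrite mul1n (@eq_in_count _ _ (pred1 (nat_of_ord m))); last first.
    by move=> j; rewrite mem_iota => /andP[_ hj]; rewrite /= sm_eq //; lia.
  by rewrite count_uniq_mem ?iota_uniq // mem_iota.
by rewrite mul0n; elim: (iota s n).
Qed.

Lemma gad_src k b i m : (3*k+2 < R)%N -> (1 < N)%N ->
  (lsrc (gad k b) i m <= (3*k <= nat_of_ord i) && (nat_of_ord i < 3*k+3))%N.
Proof.
move=> hR hN; rewrite /lsrc /gad !count_cat !cnt_blk; try by case: b; lia.
case: b; rewrite /suf /sufr /fZ /fW /fV /mkf /= !sw_eq ?sm_eq; lia.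
Qed.

Lemma gad_dst k b i m : (3*k+2 < R)%N -> (1 < N)%N ->
  (ldst (gad k b) i m <= (3*k <= nat_of_ord i) && (nat_of_ord i < 3*k+3))%N.
Proof.
move=> hR hN; rewrite /ldst /gad !count_cat !cnt_blk; try by case: b; lia.
case: b; rewrite /suf /sufr /fZ /fW /fV /mkf /= !sw_eq ?sm_eq; lia.
Qed.

Lemma gads_cnt bs : forall k i m, (3*(k + size bs) <= R)%N -> (1 < N)%N ->
  (lsrc (gads k bs) i m <= (3*k <= nat_of_ord i) && (nat_of_ord i < 3*(k + size bs)))%N /\
  (ldst (gads k bs) i m <= (3*k <= nat_of_ord i) && (nat_of_ord i < 3*(k + size bs)))%N.
Proof.
elim: bs => [|b bs IH] k i m hR hN; first by [].
rewrite /= in hR.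
have [h1 h2] := IH k.+1 i m ltac:(lia) hN.
have g1 : (lsrc (gad k b) i m <= (3*k <= nat_of_ord i) && (nat_of_ord i < 3*k+3))%N.
  by apply: gad_src => //; lia.
have g2 : (ldst (gad k b) i m <= (3*k <= nat_of_ord i) && (nat_of_ord i < 3*k+3))%N.
  by apply: gad_dst => //; lia.
rewrite /lsrc /ldst in h1 h2 g1 g2.
by split; rewrite /lsrc /ldst /= count_cat; lia.
Qed.

Lemma gads_good bs : (3 * size bs <= R)%N -> (1 < N)%N -> good (gads 0 bs).
Proof.
move=> hR hN; apply/goodP => i m.
have [h1 h2] := @gads_cnt bs 0 i m ltac:(lia) hN; split; lia.
Qed.

Lemma size_gads bs : forall k, (size (gads k bs) <= (2 * N + 2) * size bs)%N.
Proof.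
elim: bs => [|b bs IH] k //=; rewrite size_cat.
have := IH k.+1; rewrite /gad !size_cat !size_map !size_iota size_zip.
by case: b; rewrite /suf /sufr /=; lia.
Qed.

Lemma dem_Fs bs : forall k, all (fun f : flowT => dem f == dl) (Fs k bs).
Proof.
elim: bs => [|b bs IH] k //; rewrite Fs_cons all_cat IH andbT /flows !all_cat.
by rewrite !all_nseq /= eqxx !orbT; case: b; rewrite /suf /= eqxx.
Qed.

Lemma sum_dem_f (F : seq flowT) (P : pred flowT) :
  all (fun f : flowT => dem f == dl) F ->
  \sum_(f <- F | P f) dem f = (count P F)%:R * dl.
Proof.
elim: F => [|p L IH] /=; first by rewrite big_nil mul0r.
move=> /andP[/eqP hp hL]; rewrite big_cons IH //.
by case: (P p); rewrite /= ?add0n // natrD mulrDl mul1r hp.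
Qed.

Lemma valid_Fs bs : 0 < dl -> ((size (Fs 0 bs))%:R * dl <= 1) -> valid_flows (Fs 0 bs).
Proof.
move=> hdl hs; have hd := dem_Fs bs 0.
have le P : \sum_(f <- Fs 0 bs | P f) dem f <= 1.
  rewrite sum_dem_f //; apply: le_trans hs; apply: ler_wpM2r; first exact: ltW.
  by rewrite ler_nat count_size.
split; last by split => i k; apply: le.
move=> x; have : all (fun y => y == dl) (map (@dem _ _ _) (Fs 0 bs)) by rewrite all_map.
by move/allP => h /h /eqP ->.
Qed.

Lemma Fs_nil bs : size bs <> 0%N -> Fs 0 bs <> [::].
Proof.
case: bs => [|b bs] // _; rewrite Fs_cons /flows => /(congr1 size).
by rewrite !size_cat; case: b => /=; lia.
Qed.

Lemma bigmin_le_seq (I : Type) (s : seq I) (g : I -> \bar Rt) idx (j : I) k :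
  (k < size s)%N -> nth j s k = j -> (\big[Order.min/idx]_(i <- s) g i <= g j)%E.
Proof.
elim: s k => [|y s IH] k //= hk ej; rewrite big_cons ge_min.
case: k hk ej => [|k] /= hk ej; first by rewrite ej lexx.
by rewrite (IH k) ?orbT.
Qed.

Lemma bigmin_le_fin (T : finType) (g : T -> \bar Rt) idx j :
  (\big[Order.min/idx]_(i : T) g i <= g j)%E.
Proof.
have hk : (index j (index_enum T) < size (index_enum T))%N.
  by rewrite index_mem mem_index_enum.
exact: bigmin_le_seq hk (nth_index _ (mem_index_enum j)).
Qed.

Lemma OPT_ge0 (F : seq flowT) : (0 <= OPT F)%E.
Proof.
rewrite /OPT; elim/big_ind: _ => //.
- by move=> x y hx hy; rewrite le_min hx hy.
- by move=> r _; rewrite lee_fin; exact: cong_ge0.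
Qed.

Lemma OPT_le bs : 0 <= dl -> (3 * size bs <= R)%N -> (1 < N)%N ->
  (OPT (Fs 0 bs) <= dl%:E)%E.
Proof.
move=> h0 hR hN; set G := gads 0 bs.
have ht : size (map snd G) == size (Fs 0 bs) by rewrite !size_map.
rewrite /OPT; apply: le_trans (bigmin_le_fin _ _ (Tuple ht)) _.
rewrite lee_fin /=.
have -> : congestion (Fs 0 bs) (Tuple ht) = congestion (map fst G) (map snd G) by [].
apply: cong_good => //; first exact: dem_Fs.
by rewrite zip_unzip; exact: gads_good.
Qed.

Lemma low_sum n (A : seq flowT -> seq 'I_N) : online A -> (0 < n)%N -> 0 <= dl ->
  ((2 ^ n.+1).-1)%:R * dl <=
  \sum_(bs : n.-tuple bool) congestion (Fs 0 bs) (A (Fs 0 bs)).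
Proof.
move=> hA hn h0.
have pos (bs : n.-tuple bool) : dl <= congestion (Fs 0 bs) (A (Fs 0 bs)).
  apply: cong_pos => //; [exact: dem_Fs | exact: hA.1 | apply: Fs_nil].
  by rewrite size_tuple; lia.
have e2 := expn_gt0 2 n.
case: (pickP (fun bs : n.-tuple bool => good (zip (Fs 0 bs) (A (Fs 0 bs))))) => [b0 g0|none].
  rewrite (bigD1 b0) //=.
  have : \sum_(bs | bs != b0) 2%:R * dl <=
         \sum_(bs : n.-tuple bool | bs != b0) congestion (Fs 0 bs) (A (Fs 0 bs)).
    apply: ler_sum => bs nb; apply: cong_bad => //; first exact: dem_Fs.
    apply/negP => gb; move/negP: nb; apply; apply/eqP; apply: val_inj.
    have ss : size (val bs) = size (val b0) by rewrite !size_tuple.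
    exact: (@uniq_good A hA (val bs) (val b0) 0 [::] ss gb g0).
  rewrite sumr_const cardC1 card_tuple card_bool => h.
  apply: le_trans (lerD (pos b0) h).
  have e : ((2 ^ n.+1).-1 = 1 + 2 * (2 ^ n).-1)%N by rewrite expnS; lia.
  rewrite e natrD natrM mulr_natr; rewrite le_eqVlt; apply/orP; left; apply/eqP; ring.
have h : \sum_(bs : n.-tuple bool) 2%:R * dl <=
         \sum_(bs : n.-tuple bool) congestion (Fs 0 bs) (A (Fs 0 bs)).
  apply: ler_sum => bs _; apply: cong_bad => //; first exact: dem_Fs.
  by rewrite none.
apply: le_trans h; rewrite sumr_const card_tuple card_bool.
have -> : 2%:R * dl *+ 2 ^ n = (2 * 2 ^ n)%:R * dl.
  by rewrite -[_ *+ _]mulr_natr natrM; ring.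
rewrite ler_wpM2r // ler_nat expnS; lia.
Qed.

End Gad.

Local Open Scope classical_set_scope.

Lemma meas_alg (Rt : realType) N R d (T : measurableType d)
  (alg : T -> seq (flow Rt N R) -> seq 'I_N) F (h : seq 'I_N -> \bar Rt) :
  (forall s, measurable [set w | alg w F = s]) ->
  measurable_fun setT (fun w => h (alg w F)).
Proof.
move=> hm _ B mB; rewrite setTI.
have -> : (fun w => h (alg w F)) @^-1` B =
    \bigcup_(s : seq 'I_N) ([set w | alg w F = s] `&` [set _ | B (h s)]).
  apply/seteqP; split => [w /= hw | w [s _ [/= <- hb]]] //.
  by exists (alg w F).
apply: countable_bigcupT_measurable; first exact: countableP.
move=> s; apply: measurableI; first exact: hm.
case: (pselect (B (h s))) => hb.
  by rewrite (_ : [set _ | _] = setT) //; apply/seteqP; split.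
by rewrite (_ : [set _ | _] = set0) //; apply/seteqP; split.
Qed.

Local Close Scope classical_set_scope.

Theorem mainTheorem7 (Rt : realType) (N R : nat) :
  (2 <= N)%N -> (3 <= R)%N ->
  forall c : Rt, c < 2 - ((2 ^ (R %/ 3))%:R)^-1 ->
  ~ @rand_c_approx Rt N R c.
Proof.
move=> hN hR c hc [d [T [P [alg [hdet [hmeas hint]]]]]].
move: hc; set S := (R %/ 3)%N => hc.
have hS : (0 < S)%N by rewrite /S; lia.
have h3S : (3 * S <= R)%N by rewrite /S; lia.
have i0 : 'I_R by exists 0%N; lia.
have m0 : 'I_N by exists 0%N; lia.
set M := ((2 * N + 2) * S)%N.
have hM : (0 < M)%N by rewrite /M; lia.
set dl : Rt := (M%:R)^-1.
have hdl : 0 < dl by rewrite invr_gt0 ltr0n.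
set F := fun bs : S.-tuple bool => Fs i0 m0 dl 0 bs.
have valid (bs : S.-tuple bool) : valid_flows (F bs).
  apply: valid_Fs => //.
  have := size_gads i0 m0 dl bs 0; rewrite size_tuple => hs.
  rewrite ler_pdivrMr ?ltr0n // mul1r ler_nat /Fs size_map.
  by apply: leq_trans hs _; rewrite /M.
pose c' := Num.max c 0.
have K0 : (0 < (2 ^ S)%:R :> Rt) by rewrite ltr0n expn_gt0.
have hK1 : ((2 ^ S)%:R^-1 <= 1 :> Rt).
  by rewrite invf_le1 // -[1]/(1%:R) ler_nat expn_gt0.
have hc' : c' < 2 - ((2 ^ S)%:R)^-1.
  by rewrite /c' gt_max hc /=; lra.
have c'0 : 0 <= c' by rewrite /c' le_max lexx orbT.
have up (bs : S.-tuple bool) :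
    (\int[P]_w (congestion (F bs) (alg w (F bs)))%:E <= (c' * dl)%:E)%E.
  apply: le_trans (hint _ (valid bs)) _.
  have o0 := OPT_ge0 (F bs).
  have o1 : (OPT (F bs) <= dl%:E)%E.
    by apply: OPT_le; rewrite ?size_tuple // ltW.
  apply: (@le_trans _ _ (c'%:E * OPT (F bs))%E).
    by apply: lee_wpmul2r => //; rewrite lee_fin /c' le_max lexx.
  by rewrite EFinM; apply: lee_wpmul2l => //; rewrite lee_fin.
have meas (bs : S.-tuple bool) :
    measurable_fun setT (fun w => (congestion (F bs) (alg w (F bs)))%:E).
  exact: (@meas_alg _ _ _ _ _ alg (F bs) (fun s => (congestion (F bs) s)%:E) (hmeas (F bs))).
have low w : ((2 ^ S.+1).-1)%:R * dl <=
    \sum_(bs : S.-tuple bool) congestion (F bs) (alg w (F bs)).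
  exact: (@low_sum Rt N R i0 m0 dl S (alg w) (hdet w) hS (ltW hdl)).
have key : ((((2 ^ S.+1).-1)%:R * dl)%:E <=
    \sum_(bs : S.-tuple bool) \int[P]_w (congestion (F bs) (alg w (F bs)))%:E)%E.
  rewrite -ge0_integral_sum //; last by move=> bs w _; rewrite lee_fin cong_ge0.
  have -> : (((2 ^ S.+1).-1)%:R * dl)%:E =
      (\int[P]_w (cst (((2 ^ S.+1).-1)%:R * dl)%:E w))%E.
    by rewrite integral_cst //; rewrite -[LHS]mule1; congr (_ * _)%E; exact/esym/probability_setT.
  apply: ge0_le_integral => //.
  - by move=> w _; rewrite lee_fin mulr_ge0 // ltW.
  - exact: emeasurable_sum.
  - by move=> w _; rewrite sumEFin lee_fin; exact: low w.
have key2 : (\sum_(bs : S.-tuple bool) \int[P]_w (congestion (F bs) (alg w (F bs)))%:E <=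
    ((c' * dl) *+ 2 ^ S)%:E)%E.
  apply: (@le_trans _ _ (\sum_(bs : S.-tuple bool) ((c' * dl)%:E))%E).
    by apply: lee_sum => bs _; exact: up bs.
  by rewrite sumEFin sumr_const card_tuple card_bool.
have := le_trans key key2; rewrite lee_fin => H.
have e : ((2 ^ S.+1).-1 = 2 * 2 ^ S - 1)%N by rewrite expnS subn1.
rewrite e natrB ?muln_gt0 ?expn_gt0 // natrM -[c' * dl *+ _]mulr_natr in H.
set K := (2 ^ S)%:R : Rt in H hc' K0 hK1.
have H1 : 2 * K - 1 <= c' * K.
  by rewrite -(ler_pM2r hdl) [c' * K * dl]mulrAC.
have H2 : c' * K < 2 * K - 1.
  by rewrite -(ltr_pM2r K0) mulrBl mulVf ?gt_eqF // mul1r in hc'; rewrite mulrC.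
lra.
Qed.
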